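(* Let $1<p\le\infty$. Every symmetric space $X$ on $[0,1]$ with property $(D_p)$ has property $(UD_p)$.
   Context: A symmetric (rearrangement invariant) space $X$ on $[0,1]$ is a Banach space of (classes of) Lebesgue measurable functions on $[0,1]$ with the ideal property ($|x|\le|y|$ a.e., $y\in X$ imply $x\in X$, $\|x\|_X\le\|y\|_X$) such that if $y\in X$ and $x^*=y^*$ (non-increasing rearrangements) then $x\in X$ and $\|x\|_X=\|y\|_X$. For $1<p\le\infty$ ($\ell_\infty$ meaning $c_0$), $X$ has property $(D_p)$ if every sequence $(x_n)$ of pairwise disjointly supported elements with $\|x_n\|_X\le1$ has a subsequence $(x_{n_k})$ and a constant $C>0$ with $\|\sum_kc_kx_{n_k}\|_X\le C\|(c_k)\|_{\ell_p}$ for all $(c_k)\in\ell_p$; $X$ has property $(UD_p)$ if the constant $C$ can be chosen the same for all such sequences. *)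

(* Defs.v *)
From HB Require Import structures.
From mathcomp Require Import all_boot all_order all_algebra.
From mathcomp Require Import all_classical all_reals all_analysis.
Set Implicit Arguments. Unset Strict Implicit. Unset Printing Implicit Defensive.
Import Order.TTheory GRing.Theory Num.Theory.
Import numFieldNormedType.Exports.
Local Open Scope classical_set_scope.
Local Open Scope ring_scope.

Section SymSpaces.
Variable R : realType.

Definition leb := (@lebesgue_measure R).
Definition I01 : set R := `[0%R, 1%R].

Definition ae01 (P : R -> Prop) : Prop :=
  {ae leb, forall s, I01 s -> P s}.

Definition distr (x : R -> R) (t : R) : \bar R :=
  leb [set s | I01 s /\ t < `|x s|].

Definition rearr (x : R -> R) (t : R) : \bar R :=
  ereal_inf ((fun s : R => s%:E) @` [set s : R | 0 <= s /\ (distr x s <= t%:E)%E]).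

(* X = (mem, nrm) is a symmetric (rearrangement invariant) Banach function
   space on [0,1]: mem is the set of (representatives of) elements of X and
   nrm the norm. *)
Definition is_symmetric_space (mem : set (R -> R)) (nrm : (R -> R) -> R) : Prop :=
  [/\
      (forall x : R -> R, mem x -> measurable_fun I01 x) /\
      (mem (fun _ => 0) /\
      (forall x y, mem x -> mem y -> mem (fun s => x s + y s)) /\
      (forall (a : R) x, mem x -> mem (fun s => a * x s))),
      (* norm (on classes modulo a.e. equality on [0,1]) *)
      (forall x, mem x -> nrm x = 0 -> ae01 (fun s => x s = 0)) /\
      (forall x y, mem x -> mem y -> nrm (fun s => x s + y s) <= nrm x + nrm y) /\
      (forall (a : R) x, mem x -> nrm (fun s => a * x s) = `|a| * nrm x),
      (forall u : nat -> R -> R, (forall n, mem (u n)) ->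
         (forall e : R, 0 < e -> exists N : nat, forall m n : nat, (N <= m)%N -> (N <= n)%N ->
            nrm (fun s => u m s - u n s) <= e) ->
         (exists y, mem y /\ forall e : R, 0 < e -> exists N : nat, forall n : nat, (N <= n)%N ->
            nrm (fun s => u n s - y s) <= e)),
      (forall x y : R -> R, measurable_fun I01 x -> mem y ->
         ae01 (fun s => `|x s| <= `|y s|) -> mem x /\ nrm x <= nrm y)
    &
      (forall x y : R -> R, measurable_fun I01 x -> mem y ->
         (forall t, I01 t -> rearr x t = rearr y t) -> mem x /\ nrm x = nrm y)].

Definition disjoint_seq (x : nat -> R -> R) : Prop :=
  forall n m : nat, n <> m -> ae01 (fun s => x n s = 0 \/ x m s = 0).

Definition lpnorm (p : \bar R) (N : nat) (c : nat -> R) : R :=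
  match p with
  | EFin q => (\sum_(k < N) `|c k| `^ q) `^ q^-1
  | _ => \big[Num.max/0]_(k < N) `|c k|
  end.

Definition strictly_incr (phi : nat -> nat) : Prop :=
  forall i j : nat, (i < j)%N -> (phi i < phi j)%N.

Definition comb (x : nat -> R -> R) (phi : nat -> nat) (N : nat) (c : nat -> R) : R -> R :=
  fun s => \sum_(k < N) c k * x (phi k) s.

Definition upper_p_estimate (nrm : (R -> R) -> R) (p : \bar R)
    (x : nat -> R -> R) (phi : nat -> nat) (C : R) : Prop :=
  forall (N : nat) (c : nat -> R), nrm (comb x phi N c) <= C * lpnorm p N c.

Definition normalized_disjoint (mem : set (R -> R)) (nrm : (R -> R) -> R)
    (x : nat -> R -> R) : Prop :=
  (forall n, mem (x n)) /\ (forall n, nrm (x n) <= 1) /\ disjoint_seq x.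

Definition property_D (mem : set (R -> R)) (nrm : (R -> R) -> R) (p : \bar R) : Prop :=
  forall x : nat -> R -> R, normalized_disjoint mem nrm x ->
    exists phi, strictly_incr phi /\ exists C : R, 0 < C /\ upper_p_estimate nrm p x phi C.

Definition property_UD (mem : set (R -> R)) (nrm : (R -> R) -> R) (p : \bar R) : Prop :=
  exists C : R, 0 < C /\ forall x : nat -> R -> R, normalized_disjoint mem nrm x ->
    exists phi, strictly_incr phi /\ upper_p_estimate nrm p x phi C.

End SymSpaces.

(* Main.v *)
Require Import Defs.
From HB Require Import structures.
From mathcomp Require Import all_boot all_order all_algebra.
From mathcomp Require Import all_classical all_reals all_analysis.
From mathcomp Require Import ring lra.
Import Order.TTheory GRing.Theory Num.Theory.
Import numFieldNormedType.Exports.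
Local Open Scope classical_set_scope.
Local Open Scope ring_scope.

Section Basic.
Variable R : realType.
Local Notation mu := (@lebesgue_measure R).

Lemma mI01 : measurable (@I01 R).
Proof. exact: measurable_itv. Qed.

Lemma muI01 : mu (@I01 R) = 1%E.
Proof. by rewrite /I01 lebesgue_measure_itv /= lte_fin ltr01 oppr0 adde0. Qed.

Lemma mu_fin (X : set R) : measurable X -> X `<=` @I01 R ->
  mu X = (fine (mu X))%:E /\ 0 <= fine (mu X) <= 1.
Proof.
move=> mX XI.
have h1 : (mu X <= 1)%E by rewrite -muI01; apply: le_measure => //; rewrite inE//; exact: mI01.
have h0 : (0 <= mu X)%E by exact: measure_ge0.
have fX : mu X \is a fin_num by rewrite ge0_fin_numE// (le_lt_trans h1)// ltry.
split; first by rewrite fineK.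
by rewrite fine_ge0//= -lee_fin fineK.
Qed.

Lemma ae01E (P : R -> Prop) : ae01 P <->
  exists N : set R, [/\ measurable N, mu N = 0%E & forall s, @I01 R s -> ~ N s -> P s].
Proof.
rewrite /ae01 /leb; split.
- move=> [N [mN N0 sub]]; exists N; split => // s Is Ns.
  apply: contrapT => nP; apply: Ns; apply: sub => /=; tauto.
- move=> [N [mN N0 H]]; exists N; split => // s /= nP.
  apply: contrapT => Ns; apply: nP => Is; exact: H.
Qed.
End Basic.

Section Quantile.
Variables (R : realType) (A : set R) (mA : measurable A) (AI : A `<=` @I01 R) (b : R).
Local Notation mu := (@lebesgue_measure R).

Definition qa := fine (mu A).
Definition qG (s : R) := fine (mu (A `&` `]-oo, s[)).

Lemma qG_fin s : mu (A `&` `]-oo, s[) = (qG s)%:E.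
Proof.
have mAs : measurable (A `&` `]-oo, s[) by apply: measurableI => //; exact: measurable_itv.
have := @mu_fin R _ mAs (subset_trans (@subIsetl _ _ _) AI).
by case.
Qed.

Lemma qa_fin : mu A = qa%:E.
Proof. by have [] := @mu_fin R _ mA AI. Qed.

Lemma qG_ge0 s : 0 <= qG s.
Proof. by rewrite -lee_fin -qG_fin measure_ge0//; apply: measurableI => //; exact: measurable_itv. Qed.

Lemma qG_le s t : s <= t -> qG s <= qG t.
Proof.
move=> st; rewrite -lee_fin -!qG_fin; apply: le_measure; rewrite ?inE.
- by apply: measurableI => //; exact: measurable_itv.
- by apply: measurableI => //; exact: measurable_itv.
apply: setIS => x /=; rewrite !in_itv /= => xs; exact: lt_le_trans xs st.
Qed.

Lemma qG_le_qa s : qG s <= qa.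
Proof.
rewrite -lee_fin -qG_fin -qa_fin; apply: le_measure; rewrite ?inE//.
by apply: measurableI => //; exact: measurable_itv.
Qed.

Lemma qG_le0 s : s <= 0 -> qG s = 0.
Proof.
move=> s0; apply/eqP; rewrite -(@eqe R) -qG_fin.
have -> : A `&` `]-oo, s[ = set0; last by rewrite measure0.
apply/seteqP; split => x //= [/AI]; rewrite /I01 /= !in_itv /= => /andP[x0 _].
by rewrite ltNge (le_trans s0 x0).
Qed.

Lemma qG_gt1 s : 1 < s -> qG s = qa.
Proof.
move=> s1; apply/eqP; rewrite -(@eqe R) -qG_fin -qa_fin.
have -> : A `&` `]-oo, s[ = A; last by [].
apply/seteqP; split => x; first by case.
move=> Ax; split => //; move/AI: Ax; rewrite /I01 /= !in_itv /= => /andP[_ x1].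
exact: le_lt_trans x1 s1.
Qed.

Lemma qG_lc s v : v < qG s -> exists s', s' < s /\ v < qG s'.
Proof.
move=> vs.
pose F n := A `&` `]-oo, s - (n.+1%:R)^-1[.
have mF n : measurable (F n) by apply: measurableI => //; exact: measurable_itv.
have UF : \bigcup_n F n = A `&` `]-oo, s[.
  apply/seteqP; split => x.
    move=> [n _ [Ax]]; rewrite /= !in_itv /= => xs; split => //.
    apply: (lt_le_trans xs); rewrite lerBlDr lerDl invr_ge0 //.
  move=> [Ax]; rewrite /= in_itv /= => xs.
  have [k hk] := ltr_add_invr xs.
  exists k => //; split => //=; rewrite in_itv /= ltrBrDr //.
have ndF : nondecreasing_seq F.
  move=> n m nm; rewrite /F; apply/subsetPset; apply: setIS => x /=; rewrite !in_itv /= => xs.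
  apply: (lt_le_trans xs); apply: lerB => //; rewrite lef_pV2 ?posrE ?ltr0n// ler_nat ltnS//.
have cv := nondecreasing_cvg_mu (mu:=mu) mF (ltac:(rewrite UF; apply: measurableI => //; exact: measurable_itv)) ndF.
pose M := (v + qG s) / 2.
have vM : v < M by rewrite /M ltr_pdivlMr// mulr2n mulrDr mulr1 ltrD2l.
have Ms : M < qG s by rewrite /M ltr_pdivrMr// mulr2n mulrDr mulr1 ltrD2r.
have : \forall n \near \oo, (M%:E <= mu (F n))%E.
  apply: lte_lim.
  - by move=> n m nm /=; apply: le_measure; rewrite ?inE; [exact: mF|exact: mF|apply/subsetPset; exact: ndF].
  - by apply/cvg_ex; eexists; exact: cv.
  - rewrite (cvg_lim _ cv) // UF.
    apply: (@lt_le_trans _ _ (qG s)%:E); first by rewrite lte_fin.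
    by rewrite le_eqVlt; apply/orP; left; apply/eqP; exact: (esym (qG_fin s)).
case=> N _ /(_ N (leqnn N)) /= hN.
exists (s - N.+1%:R^-1); split; first by rewrite ltrBlDr ltrDl invr_gt0 ltr0n.
apply: (lt_le_trans vM); rewrite -lee_fin; apply: (le_trans hN).
by rewrite le_eqVlt; apply/orP; left; apply/eqP; exact: (qG_fin _).
Qed.
End Quantile.

Section Quantile2.
Variables (R : realType) (A : set R) (mA : measurable A) (AI : A `<=` @I01 R) (b : R).
Local Notation mu := (@lebesgue_measure R).
Local Notation qG := (@qG R A).
Local Notation qa := (@qa R A).

Definition qset (u : R) := [set s : R | s <= 1 /\ (s <= 0 \/ qG s <= u - b)].
Definition qS (u : R) := sup (qset u).

Lemma qset0 u : qset u 0.
Proof. by split; [exact: ler01 | left]. Qed.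

Lemma qset_ub u : ubound (qset u) 1.
Proof. by move=> s []. Qed.

Lemma qset_hs u : has_sup (qset u).
Proof. by split; [exists 0; exact: qset0 | exists 1; exact: qset_ub]. Qed.

Lemma qS_ge0 u : 0 <= qS u.
Proof. exact: sup_upper_bound (qset_hs u) _ (qset0 u). Qed.

Lemma qS_le1 u : qS u <= 1.
Proof. by apply: ge_sup; [exists 0; exact: qset0 | exact: qset_ub]. Qed.

Lemma qS_nd : {homo qS : u v / u <= v}.
Proof.
move=> u v uv; apply: ge_sup; first by exists 0; exact: qset0.
move=> s [s1 H]; apply: sup_upper_bound; first exact: qset_hs.
split => //; case: H => H; [by left | right].
by apply: (le_trans H); rewrite lerD2r.
Qed.

Lemma qS_key u s : 0 <= u - b < qa -> (qS u < s <-> u - b < qG s).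
Proof.
move=> /andP[v0 va]; split.
- move=> Ss; rewrite ltNge; apply/negP => Gs.
  have [s1|s1] := leP s 1.
    have : qset u s by split => //; right.
    move/(sup_upper_bound (qset_hs u)) => /(lt_le_trans Ss).
    by rewrite ltxx.
  by move: Gs; rewrite (@qG_gt1 R A mA AI _ s1) leNgt va.
- move=> /(@qG_lc R A mA AI _ _) [s' [s's vs']].
  apply: (le_lt_trans _ s's); apply: ge_sup; first by exists 0; exact: qset0.
  move=> r [r1 H]; rewrite leNgt; apply/negP => s'r.
  case: H => H.
    have := @qG_le R A mA AI _ _ (ltW s'r); rewrite (@qG_le0 R A mA AI _ H).
    by move=> /(lt_le_trans (le_lt_trans v0 vs')); rewrite ltxx.
  have := @qG_le R A mA AI _ _ (ltW s'r) => /(lt_le_trans vs') /(le_lt_trans H).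
  by rewrite ltxx.
Qed.

Lemma qS_mes : measurable_fun setT qS.
Proof. by apply: measurable_realfun.nondecreasing_measurable => //; exact: qS_nd. Qed.

End Quantile2.

Section Quantile3.
Variables (R : realType) (A : set R) (mA : measurable A) (AI : A `<=` @I01 R) (b : R).
Local Notation mu := (@lebesgue_measure R).
Local Notation qG := (@qG R A).
Local Notation qa := (@qa R A).
Local Notation qS := (@qS R A b).

Definition qJ := `[b, b + qa[%classic.

Lemma mqJ : measurable qJ. Proof. exact: measurable_itv. Qed.

Lemma qS_pre x : qS @^-1` `]-oo, x[ `&` qJ = `[b, b + qG x[%classic.
Proof.
apply/seteqP; split => u /=.
- rewrite /qJ /= !in_itv /= => -[ux /andP[bu ua]].
  have key := @qS_key R A mA AI b u x.
  rewrite -subr_ge0 in bu; rewrite -ltrBlDl in ua.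
  have := (key (ltac:(by rewrite bu ua))).1 ux.
  by rewrite ltrBlDl => ->; rewrite andbT -subr_ge0.
- rewrite !in_itv /= => /andP[bu ux]; rewrite /qJ /= !in_itv /= bu.
  have key := @qS_key R A mA AI b u x.
  have uq : u < b + qa by apply: (lt_le_trans ux); rewrite lerD2l (@qG_le_qa R A mA AI).
  split => //.
  rewrite -subr_ge0 in bu; rewrite -ltrBlDl in ux; rewrite -ltrBlDl in uq.
  by apply: (key (ltac:(by rewrite bu uq))).2.
Qed.


Lemma qS_push B : measurable B -> mu (qS @^-1` B `&` qJ) = mu (A `&` B).
Proof.
move=> mB.
have mG : @measurable _ (measurableTypeR R) = (@measurable_realfun.RGenInftyO.G R).-sigma.-measurable.
  exact: measurable_realfun.RGenInftyO.measurableE.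
have setIG : setI_closed (@measurable_realfun.RGenInftyO.G R).
  move=> X Y [x ->] [y ->]; exists (Order.min x y).
  apply/seteqP; split => z /=; rewrite !in_itv /= ?lt_min; [by case=> -> -> | by case/andP].
have Gg : forall k : nat, @measurable_realfun.RGenInftyO.G R `]-oo, k%:R[%classic by move=> k; exists k%:R.
have cover : \bigcup_k `]-oo, (k%:R : R)[%classic = setT.
  apply/seteqP; split => // z _ /=.
  exists (Num.Def.archi_bound `|z|) => //=; rewrite in_itv /=.
  by apply: (le_lt_trans (ler_norm z)); apply: archi_boundP.
suff : (@pushforward _ _ (measurableTypeR R) (measurableTypeR R) R (mrestr mu mqJ) qS) B = (mrestr mu mA) B.
  by rewrite /pushforward /mrestr => ->; rewrite setIC.
unshelve eapply (@measure_unique _ R (measurableTypeR R) (@measurable_realfun.RGenInftyO.G R) (fun k => `]-oo, k%:R[%classic) mG setIG Gg cover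
   (@pushforward _ _ (measurableTypeR R) (measurableTypeR R) R (mrestr mu mqJ) qS) (mrestr mu mA) _ _ B mB).
- exact: (@qS_mes R A b).
- move=> _ [x ->]; rewrite /pushforward /mrestr.
  change (mu (qS @^-1` `]-oo, x[ `&` qJ) = mu (`]-oo, x[ `&` A)).
  rewrite qS_pre setIC (@qG_fin R A mA AI).
  rewrite lebesgue_measure_itv /= lte_fin ltrDl.
  have := @qG_ge0 R A mA AI x; rewrite le_eqVlt => /orP[/eqP <-|->].
    by rewrite ltxx.
  by rewrite -EFinD addrAC subrr add0r.
- move=> k; rewrite /pushforward /mrestr.
  change (mu (qS @^-1` `]-oo, k%:R[ `&` qJ) < +oo)%E.
  by rewrite qS_pre lebesgue_measure_itv; case: ifP => _; rewrite ?ltry.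
Qed.
End Quantile3.

Section Copy.
Variables (R : realType) (A : set R) (mA : measurable A) (AI : A `<=` @I01 R) (b : R).
Hypotheses (b0 : 0 <= b) (b1 : b + @qa R A <= 1).
Local Notation mu := (@lebesgue_measure R).
Local Notation qS := (@qS R A b).
Local Notation qJ := (@qJ R A b).

Definition cp (f : R -> R) (u : R) : R := \1_qJ u * f (qS u).

Lemma qJI : qJ `<=` @I01 R.
Proof.
move=> u; rewrite /qJ /I01 /= !in_itv /= => /andP[bu ub].
by rewrite (le_trans b0 bu) /= (le_trans (ltW ub) b1).
Qed.

Lemma qS_I u : @I01 R (qS u).
Proof. by rewrite /I01 /= in_itv /= qS_ge0 qS_le1. Qed.

Lemma cp_in f u : qJ u -> cp f u = f (qS u).
Proof. by move=> Ju; rewrite /cp indicE mem_set // mul1r. Qed.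

Lemma cp_out f u : ~ qJ u -> cp f u = 0.
Proof. by move=> Ju; rewrite /cp indicE memNset // mul0r. Qed.

Lemma cp_mes (f : R -> R) : measurable_fun (@I01 R) f -> measurable_fun (@I01 R) (cp f).
Proof.
move=> mf.
have h : measurable_fun setT (f \o qS).
  apply: (measurable_comp (@mI01 R) _ mf (@qS_mes R A b)).
  by move=> _ [u _ <-]; exact: qS_I.
apply: (measurable_funS measurableT (@subsetT _ _)).
apply: measurable_realfun.measurable_funM => //; apply: measurable_realfun.measurable_indic; exact: (@mqJ R A b).
Qed.

Lemma cp_distr (f : R -> R) (t : R) : 0 <= t -> measurable_fun (@I01 R) f ->
  (forall s, @I01 R s -> f s != 0 -> A s) -> distr (cp f) t = distr f t.
Proof.
move=> t0 mf fA; rewrite /distr.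
pose E := [set s | @I01 R s /\ t < `|f s|].
have mE : measurable E.
  have -> : E = @I01 R `&` ((fun s => `|f s|) @^-1` `]t, +oo[).
    by apply/seteqP; split => s /=; rewrite in_itv /= andbT.
  have mnf : measurable_fun (@I01 R) (Num.Def.normr \o f).
    by apply: measurableT_comp => //; exact: measurable_realfun.normr_measurable.
  exact: (mnf (@mI01 R) _ (measurable_itv _)).
have -> : [set u | @I01 R u /\ t < `|cp f u|] = qS @^-1` E `&` qJ.
  apply/seteqP; split => u /=.
  - move=> [Iu tu]; have Ju : qJ u.
      apply: contrapT => Ju; move: tu; rewrite cp_out // normr0 => /(le_lt_trans t0).
      by rewrite ltxx.
    by rewrite cp_in // in tu; split => //; split => //; exact: qS_I.
  - move=> [[_ tu] Ju]; split; first exact: qJI.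
    by rewrite cp_in.
rewrite /leb (@qS_push R A mA AI b E mE).
congr (mu _); apply/seteqP; split => s; first by case.
move=> [Is ts]; split => //; apply: fA => //.
by rewrite -normr_gt0 (le_lt_trans t0).
Qed.

Lemma cp_rearr (f : R -> R) : measurable_fun (@I01 R) f ->
  (forall s, @I01 R s -> f s != 0 -> A s) -> forall t, rearr (cp f) t = rearr f t.
Proof.
move=> mf fA t; rewrite /rearr; congr (ereal_inf _); congr image.
apply/seteqP; split => s /= [s0 h]; split => //; first by rewrite -(cp_distr f s s0 mf fA).
by rewrite (cp_distr f s s0 mf fA).
Qed.

End Copy.

Section Tail.
Variables (R : realType) (x : nat -> R -> R).
Hypotheses (mx : forall n, measurable_fun (@I01 R) (x n)) (dx : disjoint_seq x).
Local Notation mu := (@lebesgue_measure R).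

Definition supp k := @I01 R `&` [set s | x k s != 0].
Definition tailA n := \bigcup_(k in [set k | (n <= k)%N]) supp k.

Lemma msupp k : measurable (supp k).
Proof.
have -> : supp k = @I01 R `&` x k @^-1` (~` [set 0]).
  by apply/seteqP; split => s [Is h]; split => //=; apply/eqP.
apply: (mx k (@mI01 R)); apply: measurableC; exact: measurable_set1.
Qed.

Lemma mtailA n : measurable (tailA n).
Proof. by apply: bigcup_measurable => k _; exact: msupp. Qed.

Lemma tailA_I n : tailA n `<=` @I01 R.
Proof. by move=> s [k _ []]. Qed.

Lemma lim_sup_supp0 : mu (lim_sup_set supp) = 0%E.
Proof.
pose Bad j k := [set s | j != k /\ @I01 R s /\ x j s != 0 /\ x k s != 0].
have nB j k : mu.-negligible (Bad j k).
  have [->|jk] := eqVneq j k.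
    by apply: (negligibleS _ (@negligible_set0 _ _ _ mu)) => s [/eqP].
  have := dx j k (elimN eqP jk); rewrite /ae01 => h.
  apply: (negligibleS _ h) => s [_ [Is [xj xk]]] /=.
  by move=> /(_ Is) [/eqP|/eqP]; [rewrite (negbTE xj) | rewrite (negbTE xk)].
have nU : mu.-negligible (\bigcup_j \bigcup_k Bad j k).
  by apply: negligible_bigcup => j; apply: negligible_bigcup => k; exact: nB.
have mL : measurable (lim_sup_set supp).
  apply: bigcap_measurable => // n _; apply: bigcup_measurable => k _; exact: msupp.
apply/(@negligibleP _ _ _ mu _ mL); apply: (negligibleS _ nU).
move=> s Ls; have [j /= _ [Is xj]] := Ls 0%N I.
have [k /= jk [_ xk]] := Ls j.+1 I.
exists j => //; exists k => //; split; first by rewrite neq_ltn jk.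
by [].
Qed.

Lemma tail_small eps : 0 < eps -> exists n, (mu (tailA n) <= eps%:E)%E.
Proof.
move=> e0.
have fin0 : (mu (tailA 0) < +oo)%E.
  have [-> _] := @mu_fin R _ (mtailA 0) (tailA_I 0).
  by rewrite ltry.
have cv := lim_sup_set_cvg mu supp msupp fin0.
have cv0 : mu (tailA n) @[n --> \oo] --> 0%E.
  rewrite -lim_sup_supp0; exact: cv.
move/fine_cvgP: cv0 => [fin cv1].
have := cvgr_lt _ cv1 _ e0.
case: fin => N1 _ H1; case=> N2 _ H2.
have /fineK E := H1 (maxn N1 N2) (leq_maxl _ _).
have lt := H2 (maxn N1 N2) (leq_maxr _ _).
by exists (maxn N1 N2); rewrite -E lee_fin ltW.
Qed.
End Tail.

Section Shift.
Variables (R : realType) (p : \bar R) (p1 : (1%:E < p)%E).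

Lemma sincr_ge phi : strictly_incr phi -> forall n, (n <= phi n)%N.
Proof.
move=> sp; elim=> [|n IH] //; apply: (leq_ltn_trans IH); apply: sp; exact: ltnSn.
Qed.

Lemma sincr_shift phi m : strictly_incr phi -> strictly_incr (fun j => phi (j + m)%N).
Proof. by move=> sp i j ij; apply: sp; rewrite ltn_add2r. Qed.

Lemma lpmax_ge0 N (c : nat -> R) : 0 <= \big[Num.max/0]_(k < N) `|c k|.
Proof. by elim/big_ind: _ => // u v hu hv; rewrite le_max hu. Qed.

Lemma shift1 nrm (x : nat -> R -> R) phi C :
  upper_p_estimate nrm p x phi C -> upper_p_estimate nrm p x (fun j => phi j.+1) C.
Proof.
move=> up N c'.
pose c j := if j is j'.+1 then c' j' else 0.
have Ec : comb x phi N.+1 c = comb x (fun j => phi j.+1) N c'.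
  apply: funext => s; rewrite /comb big_ord_recl /= mul0r add0r.
  by apply: eq_bigr => i _; rewrite /bump /=.
have El : lpnorm p N.+1 c = lpnorm p N c'.
  rewrite /lpnorm; case: p p1 => [q|//|//] q1.
    congr (_ `^ _); rewrite big_ord_recl /= normr0 powR0 ?add0r.
      by apply: eq_bigr => i _; rewrite /bump /=.
    by rewrite lte_fin in q1; apply/negP => /eqP q0; rewrite q0 ltr10 in q1.
  rewrite big_ord_recl /= normr0 max_r; last exact: lpmax_ge0.
  by apply: eq_bigr => i _; rewrite /bump /=.
by rewrite -Ec -El; exact: up.
Qed.

Lemma upper_shift nrm (x : nat -> R -> R) phi C m :
  upper_p_estimate nrm p x phi C -> upper_p_estimate nrm p x (fun j => phi (j + m)%N) C.
Proof.
elim: m => [|m IH] up.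
  by have -> : (fun j => phi (j + 0)%N) = phi by apply: funext => j; rewrite addn0.
have := @shift1 nrm x _ C (IH up).
by have -> : (fun j => phi (j.+1 + m)%N) = (fun j => phi (j + m.+1)%N) by apply: funext => j; rewrite addSnnS.
Qed.
End Shift.

Section Space.
Variables (R : realType) (mem : set (R -> R)) (nrm : (R -> R) -> R).
Hypothesis hS : is_symmetric_space mem nrm.

Lemma sp_meas (x : R -> R) : mem x -> measurable_fun (@I01 R) x.
Proof. by case: hS => [[h _] _ _ _ _]; exact: h. Qed.
Lemma sp_mem0 : mem (fun _ => 0).
Proof. by case: hS => [[_ [h _]] _ _ _ _]. Qed.
Lemma sp_memD (x y : R -> R) : mem x -> mem y -> mem (fun s => x s + y s).
Proof. by case: hS => [[_ [_ [h _]]] _ _ _ _]; exact: h. Qed.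
Lemma sp_memZ (a : R) (x : R -> R) : mem x -> mem (fun s => a * x s).
Proof. by case: hS => [[_ [_ [_ h]]] _ _ _ _]; exact: h. Qed.
Lemma sp_tri (x y : R -> R) : mem x -> mem y -> nrm (fun s => x s + y s) <= nrm x + nrm y.
Proof. by case: hS => [_ [_ [h _]] _ _ _]; exact: h. Qed.
Lemma sp_hom (a : R) (x : R -> R) : mem x -> nrm (fun s => a * x s) = `|a| * nrm x.
Proof. by case: hS => [_ [_ [_ h]] _ _ _]; exact: h. Qed.
Lemma sp_ideal (x y : R -> R) : measurable_fun (@I01 R) x -> mem y ->
  ae01 (fun s => `|x s| <= `|y s|) -> mem x /\ nrm x <= nrm y.
Proof. by case: hS => [_ _ _ h _]; exact: h. Qed.
Lemma sp_rinv (x y : R -> R) : measurable_fun (@I01 R) x -> mem y ->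
  (forall t, @I01 R t -> rearr x t = rearr y t) -> mem x /\ nrm x = nrm y.
Proof. by case: hS => [_ _ _ _ h]; exact: h. Qed.

Lemma sp_nrm0 : nrm (fun _ => 0) = 0.
Proof.
have := sp_hom 0 _ sp_mem0; rewrite normr0 mul0r => E.
by rewrite mul0r in E.
Qed.

Lemma sp_sum n (F : nat -> R -> R) : (forall i, mem (F i)) ->
  mem (fun s => \sum_(i < n) F i s) /\ nrm (fun s => \sum_(i < n) F i s) <= \sum_(i < n) nrm (F i).
Proof.
move=> mF; elim: n => [|n [IHm IHn]].
  have -> : (fun s => \sum_(i < 0) F i s) = (fun _ => 0) by apply: funext => s; rewrite big_ord0.
  by rewrite big_ord0 sp_nrm0; split => //; exact: sp_mem0.
have -> : (fun s => \sum_(i < n.+1) F i s) = (fun s => (\sum_(i < n) F i s) + F n s).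
  by apply: funext => s; rewrite big_ord_recr.
split; first exact: (sp_memD _ _ IHm (mF n)).
rewrite big_ord_recr /=; apply: (le_trans (sp_tri _ _ IHm (mF n))).
by rewrite lerD2r.
Qed.

End Space.

Section Weights.
Variable R : realType.
Definition wt (m : nat) : R := (2 ^+ m.+1)^-1.

Lemma wt_gt0 m : 0 < wt m.
Proof. by rewrite /wt invr_gt0 exprn_gt0. Qed.

Lemma wt_sum n : \sum_(m < n) wt m = 1 - (2 ^+ n)^-1.
Proof.
elim: n => [|n IH]; first by rewrite big_ord0 expr0 invr1 subrr.
rewrite big_ord_recr /= IH /wt -addrA; congr (_ + _).
rewrite exprS invfM; field; by rewrite expf_neq0.
Qed.

Lemma wt_sum_le1 n : \sum_(m < n) wt m <= 1.
Proof. by rewrite wt_sum lerBlDr lerDl invr_ge0 exprn_ge0. Qed.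

Lemma wt2 m : 2 * wt m = (2 ^+ m)^-1.
Proof. by rewrite /wt exprS invfM mulrA divff ?mul1r. Qed.

Lemma wt2_le1 m : 2 * wt m <= 1.
Proof. by rewrite wt2 invf_le1 ?exprn_gt0 // exprn_ege1 // ler1n. Qed.

Lemma wt_sep i m : (i < m)%N -> 2 * wt m <= wt i.
Proof.
move=> im; rewrite wt2 /wt lef_pV2 ?posrE ?exprn_gt0 //.
by rewrite ler_eXn2l // ltr1n.
Qed.
End Weights.

Section Main.
Variables (R : realType) (p : \bar R) (p1 : (1%:E < p)%E) (mem : set (R -> R))
  (nrm : (R -> R) -> R).
Hypotheses (hS : is_symmetric_space mem nrm) (hD : property_D mem nrm p).
Local Notation mu := (@lebesgue_measure R).

Definition KK (m : nat) : R := m.+1%:R * 2 ^+ m.+1.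

Definition Good m (XA : (nat -> R -> R) * set R) : Prop :=
  [/\ normalized_disjoint mem nrm XA.1, measurable XA.2 /\ XA.2 `<=` @I01 R,
      (mu XA.2 <= (wt R m)%:E)%E,
      (forall k s, @I01 R s -> XA.1 k s != 0 -> XA.2 s) &
      (forall phi, strictly_incr phi -> ~ upper_p_estimate nrm p XA.1 phi (KK m))].

Lemma good_ex (nUD : ~ property_UD mem nrm p) m : exists XA, Good m XA.
Proof.
have KK0 : 0 < KK m by rewrite /KK mulr_gt0 // exprn_gt0.
have [x [nx fx]] : exists x, normalized_disjoint mem nrm x /\
    forall phi, strictly_incr phi -> ~ upper_p_estimate nrm p x phi (KK m).
  apply: contrapT => H; apply: nUD; exists (KK m); split => // x nx.
  apply: contrapT => H2; apply: H; exists x; split => // phi sp up.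
  by apply: H2; exists phi.
case: (nx) => [mx [nx1 dx]].
have mx' : forall n, measurable_fun (@I01 R) (x n).
  by move=> n; exact: (@sp_meas R mem nrm hS (x n) (mx n)).
have [n hn] := @tail_small R x mx' dx (wt R m) (wt_gt0 R m).
exists (fun k => x (k + n)%N, tailA R x n); split => /=.
- split => //; split => // i j ij; apply: dx => /eqP; rewrite eqn_add2r => /eqP //.
- by split; [exact: (@mtailA R x mx' n) | exact: (@tailA_I R x n)].
- exact: hn.
- by move=> k s Is xs; exists (k + n)%N => //=; rewrite leq_addl.
- move=> phi sp up; apply: (fx (fun j => (phi j + n)%N)).
  + by move=> i j ij; rewrite ltn_add2r; exact: sp.
  + exact: up.
Qed.


Section Contra.
Hypothesis nUD : ~ property_UD mem nrm p.

Let XA := projT1 (choice (good_ex nUD)).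
Let gXA m : Good m (XA m) := projT2 (choice (good_ex nUD)) m.
Let X m := (XA m).1.
Let A m := (XA m).2.

Let Xnd m : normalized_disjoint mem nrm (X m). Proof. by case: (gXA m). Qed.
Let mA m : measurable (A m). Proof. by case: (gXA m) => _ []. Qed.
Let AI m : A m `<=` @I01 R. Proof. by case: (gXA m) => _ []. Qed.
Let muA m : (mu (A m) <= (wt R m)%:E)%E. Proof. by case: (gXA m). Qed.
Let XA_supp m k s : @I01 R s -> X m k s != 0 -> A m s. Proof. by case: (gXA m) => _ _ _ h _; exact: h. Qed.
Let Xfail m phi : strictly_incr phi -> ~ upper_p_estimate nrm p (X m) phi (KK m).
Proof. by case: (gXA m) => _ _ _ _ h; exact: h. Qed.
Let Xmem m k : mem (X m k). Proof. by case: (Xnd m). Qed.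
Let Xnrm m k : nrm (X m k) <= 1. Proof. by case: (Xnd m) => _ []. Qed.
Let Xmes m k : measurable_fun (@I01 R) (X m k).
Proof. exact: (@sp_meas R mem nrm hS _ (Xmem m k)). Qed.

Let qa_le m : qa R (A m) <= wt R m.
Proof. by rewrite -lee_fin -(@qa_fin R (A m) (mA m) (AI m)). Qed.
Let b0 m : 0 <= wt R m. Proof. exact/ltW/wt_gt0. Qed.
Let b1 m : wt R m + qa R (A m) <= 1.
Proof. apply: (le_trans _ (wt2_le1 R m)); rewrite mulr2n mulrDl mul1r lerD2l; exact: qa_le. Qed.

Let J m := qJ R (A m) (wt R m).
Let S m := qS R (A m) (wt R m).
Let h m k := cp R (A m) (wt R m) (X m k).
Let y k := fun s => \sum_(m < k.+1) wt R m * h m k s.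

Let J_bnd m u : J m u -> wt R m <= u < 2 * wt R m.
Proof.
rewrite /J /qJ /= in_itv /= => /andP[-> ub] /=.
apply: (lt_le_trans ub); rewrite mulr2n mulrDl mul1r lerD2l; exact: qa_le.
Qed.

Let J_sep i m u : J i u -> J m u -> i = m.
Proof.
move=> /J_bnd /andP[i1 i2] /J_bnd /andP[m1 m2].
have [im|mi|//] := ltngtP i m.
  by have := lt_le_trans m2 (le_trans (wt_sep R i m im) i1); rewrite ltxx.
by have := lt_le_trans i2 (le_trans (wt_sep R m i mi) m1); rewrite ltxx.
Qed.

Let y_in m n u : J m u -> (m <= n)%N -> y n u = wt R m * X m n (S m u).
Proof.
move=> Jm mn; rewrite /y (bigD1 (Ordinal (mn : (m < n.+1)%N))) //= big1 ?addr0.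
  by rewrite /h cp_in.
move=> i /eqP ni; rewrite /h cp_out ?mulr0 // => Ji.
by apply: ni; apply: val_inj => /=; exact: J_sep Ji Jm.
Qed.

Let y_out n u : (forall m, (m <= n)%N -> ~ J m u) -> y n u = 0.
Proof.
move=> H; rewrite /y big1 // => i _; rewrite /h cp_out ?mulr0 //.
by apply: H; rewrite -ltnS.
Qed.

Let h_mem m k : mem (h m k) /\ nrm (h m k) = nrm (X m k).
Proof.
apply: (@sp_rinv R mem nrm hS).
- exact: (@cp_mes R (A m) (wt R m) (X m k) (Xmes m k)).
- exact: Xmem.
- move=> t _; apply: (@cp_rearr R (A m) (mA m) (AI m) (wt R m) (b0 m) (b1 m) (X m k) (Xmes m k)).
  exact: XA_supp.
Qed.

Let y_mem k : mem (y k) /\ nrm (y k) <= 1.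
Proof.
have [H1 H2] := @sp_sum R mem nrm hS k.+1 (fun i s => wt R i * h i k s)
  (fun i => @sp_memZ R mem nrm hS _ _ (h_mem i k).1).
split; first exact: H1.
apply: (le_trans H2); apply: (le_trans _ (wt_sum_le1 R k.+1)).
apply: ler_sum => i _; rewrite (@sp_hom R mem nrm hS _ _ (h_mem i k).1) (h_mem i k).2.
by rewrite ger0_norm ?b0 // ler_piMr ?b0.
Qed.

Let y_nz n u : y n u != 0 -> exists2 m, (m <= n)%N & J m u.
Proof.
move=> ynz; apply: contrapT => H; move/eqP: ynz; apply; apply: y_out => m mn Jm.
by apply: H; exists m.
Qed.

Let y_disj : disjoint_seq y.
Proof.
move=> j k jk.
have hN : forall m, exists N : set R, [/\ measurable N, mu N = 0%E &
    forall s, @I01 R s -> ~ N s -> X m j s = 0 \/ X m k s = 0].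
  move=> m; case: (Xnd m) => _ [_ dX].
  exact: (ae01E R (fun s => X m j s = 0 \/ X m k s = 0)).1 (dX j k jk).
have [N HN] := choice hN.
pose Bad := \bigcup_m (S m @^-1` N m `&` J m).
have mB m : measurable (S m @^-1` N m `&` J m).
  apply: measurableI; last exact: mqJ.
  have [mN _ _] := HN m.
  by rewrite -[X in measurable X]setTI; exact: (@qS_mes R (A m) (wt R m) measurableT _ mN).
have B0 m : mu (S m @^-1` N m `&` J m) = 0%E.
  have [mN N0 _] := HN m.
  rewrite (@qS_push R (A m) (mA m) (AI m) (wt R m) _ mN).
  apply/eqP; rewrite eq_le measure_ge0 andbT -N0; apply: le_measure; rewrite ?inE.
  - by apply: measurableI; [exact: mA | exact: mN].
  - exact: mN.
  - exact: subIsetr.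
have mBad : measurable Bad by exact: bigcup_measurable.
have Bad0 : mu Bad = 0%E.
  apply/(@negligibleP _ _ _ mu _ mBad); apply: negligible_bigcup => m.
  by apply/(@negligibleP _ _ _ mu _ (mB m)); exact: B0.
apply/(ae01E R (fun s => y j s = 0 \/ y k s = 0)); exists Bad; split => // s Is nB.
apply: contrapT => /not_orP [/eqP yj /eqP yk].
have [m mj Jm] := y_nz j s yj; have [m' mk Jm'] := y_nz k s yk.
have mm := J_sep m' m s Jm' Jm; subst m'.
have xj : X m j (S m s) != 0.
  by move: yj; rewrite (y_in m j s Jm mj) mulf_eq0 negb_or => /andP[].
have xk : X m k (S m s) != 0.
  by move: yk; rewrite (y_in m k s Jm mk) mulf_eq0 negb_or => /andP[].
have [_ _ HNm] := HN m.
have nN : N m (S m s).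
  apply: contrapT => nN; have := HNm _ (qS_I R (A m) (wt R m) s) nN.
  by case=> /eqP; [rewrite (negbTE xj) | rewrite (negbTE xk)].
by apply: nB; exists m.
Qed.

Lemma lp_ge0 N c : 0 <= lpnorm p N c.
Proof. rewrite /lpnorm; case: p => [q| |]; [exact: powR_ge0 | exact: lpmax_ge0 | exact: lpmax_ge0]. Qed.

Lemma contra_false : False.
Proof.
have nd_y : normalized_disjoint mem nrm y.
  split; first by move=> k; exact: (y_mem k).1.
  by split; [move=> k; exact: (y_mem k).2 | exact: y_disj].
have [phi [sp [C [C0 up]]]] := hD y nd_y.
pose m := Num.Def.archi_bound C.
have Cm : C <= m.+1%:R.
  apply: (le_trans (ltW (archi_boundP (ltW C0)))); rewrite ler_nat; exact: leqnSn.
pose psi := fun j => phi (j + m)%N.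
have spsi : strictly_incr psi := sincr_shift phi m sp.
have upsi : upper_p_estimate nrm p y psi C := upper_shift R p p1 nrm y phi C m up.
have psim : forall j, (m <= psi j)%N.
  by move=> j; apply: (leq_trans (leq_addl j m)); exact: sincr_ge.
apply: (Xfail m psi spsi) => N c.
pose f := comb (X m) psi N c.
have fmem : mem f.
  exact: (@sp_sum R mem nrm hS N (fun i s => c i * X m (psi i) s)
     (fun i => @sp_memZ R mem nrm hS _ _ (Xmem m (psi i)))).1.
have fmes := @sp_meas R mem nrm hS _ fmem.
have fA : forall s, @I01 R s -> f s != 0 -> A m s.
  move=> s Is fs; apply: contrapT => nA; move/eqP: fs; apply.
  rewrite /f /comb big1 // => i _.
  have -> : X m (psi i) s = 0.
    by apply: contrapT => /eqP xne; apply: nA; exact: (XA_supp m (psi i) s Is xne).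
  by rewrite mulr0.
pose g := cp R (A m) (wt R m) f.
have gmes : measurable_fun (@I01 R) g := @cp_mes R (A m) (wt R m) f fmes.
have [gmem gn] : mem g /\ nrm g = nrm f.
  apply: (@sp_rinv R mem nrm hS _ _ gmes fmem) => t _.
  exact: (@cp_rearr R (A m) (mA m) (AI m) (wt R m) (b0 m) (b1 m) f fmes fA).
have ymem : mem (comb y psi N c).
  exact: (@sp_sum R mem nrm hS N (fun i s => c i * y (psi i) s)
     (fun i => @sp_memZ R mem nrm hS _ _ (y_mem (psi i)).1)).1.
have wgmes : measurable_fun (@I01 R) (fun s => wt R m * g s).
  exact: (measurable_realfun.measurable_funM (measurable_cst _) gmes).
have ae : ae01 (fun s => `|wt R m * g s| <= `|comb y psi N c s|).
  apply: aeW => s _.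
  case: (pselect (J m s)) => Js; last by rewrite /g cp_out // mulr0 normr0 normr_ge0.
  suff -> : comb y psi N c s = wt R m * g s by [].
  rewrite /g cp_in // /f /comb mulr_sumr; apply: eq_bigr => i _.
  by rewrite (y_in m (psi i) s Js (psim i)) mulrCA.
have [_ le1] := @sp_ideal R mem nrm hS (fun s => wt R m * g s) (comb y psi N c) wgmes ymem ae.
rewrite (@sp_hom R mem nrm hS _ _ gmem) gn ger0_norm ?b0 // in le1.
have := le_trans le1 (upsi N c).
move=> H.
rewrite -(ler_pM2l (wt_gt0 R m)) mulrA.
have -> : wt R m * KK m = m.+1%:R.
  rewrite /wt /KK mulrCA mulVf ?mulr1 //; exact: expf_neq0.
apply: (le_trans H); apply: ler_wpM2r => //; exact: lp_ge0.
Qed.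

End Contra.
End Main.

Theorem mainTheorem7 (R : realType) (p : \bar R) (mem : set (R -> R))
    (nrm : (R -> R) -> R) :
  (1%:E < p)%E -> is_symmetric_space mem nrm ->
  property_D mem nrm p -> property_UD mem nrm p.
Proof.
move=> p1 hS hD; apply: contrapT => nUD.
exact: (@contra_false R p p1 mem nrm hS hD nUD).
Qed.
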